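(* Let $G$ be a weighted graph as in the context. For every integer $m\geq1$, \[(q^G_m(x)-q^G_m(y))^2\leq \frac{12R_G(x,y)h_G^{-1}(\lceil m/2\rceil)}{m^2},\qquad\forall x,y\in V(G).\]
   Context: $G$ is a locally finite connected graph with at least two vertices, vertex set $V(G)$ and distinguished vertex $\rho=\rho(G)$; $\mu^G$ is a symmetric weight with $\mu^G_{xy}>0$ iff $\{x,y\}$ is an edge, $\mu^G_x:=\sum_y\mu^G_{xy}$, $\nu^G(A):=\sum_{x\in A}\mu^G_x$. The discrete time simple random walk $X^G$ has transition probabilities $P_G(x,y)=\mu^G_{xy}/\mu^G_x$ and law $\mathbf{P}^G_x$; $p^G_m(x,y):=\mathbf{P}^G_x(X^G_m=y)/\nu^G(\{y\})$, $q^G_m(x,y):=\frac12(p^G_m(x,y)+p^G_{m+1}(x,y))$, $q^G_m(x):=q^G_m(\rho,x)$. The generator is $\mathcal{L}_Gf(x)=\sum_yP_G(x,y)(f(y)-f(x))$, $(f,g)_G:=\sum_xf(x)g(x)\nu^G(\{x\})$, $\mathcal{E}_G(f,g):=-(\mathcal{L}_Gf,g)_G$, $\mathcal{F}_G:=\{f:\mathcal{E}_G(f,f)<\infty\}$. The resistance metric is \[R_G(x,y):=\sup\left\{\frac{|f(x)-f(y)|^2}{\mathcal{E}_G(f,f)}:f\in\mathcal{F}_G,\ \mathcal{E}_G(f,f)>0\right\}.\] Set $V_G(r):=\nu^G(\{x:R_G(\rho,x)\le r\})$, $h_G(r):=rV_G(r)$, and $h_G^{-1}(m):=\sup\{r:h_G(r)\le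 m\}$. *)

(* Defs.v *)
From HB Require Import structures.
From mathcomp Require Import all_boot all_order all_algebra.
From mathcomp Require Import all_classical all_reals all_analysis.
Set Implicit Arguments. Unset Strict Implicit. Unset Printing Implicit Defensive.
Import Order.TTheory GRing.Theory Num.Theory.
Local Open Scope classical_set_scope.
Local Open Scope ring_scope.

Section WGraph.
Variables (R : realType) (V : choiceType).
(* mu : symmetric edge weights; N x : the (finite, duplicate-free) list of
   neighbours of x, i.e. of the y with mu x y > 0. *)
Variables (mu : V -> V -> R) (N : V -> seq V).

Definition is_wgraph : Prop :=
  (forall x y, mu x y = mu y x) /\
  (forall x y, 0 <= mu x y) /\
  (forall x y, (0 < mu x y) <-> (y \in N x)) /\
  (forall x, uniq (N x)) /\
  (forall x, mu x x = 0) /\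
  (forall x y, exists p : seq V,
      path (fun a b => b \in N a) x p /\ last x p = y) /\
  (exists x y : V, x <> y).

Definition muv (x : V) : R := \sum_(y <- N x) mu x y.

Definition Ptrans (x y : V) : R := mu x y / muv x.

Fixpoint Pstep (m : nat) (x y : V) : R :=
  match m with
  | 0%N => if x == y then 1 else 0
  | m'.+1 => \sum_(z <- N x) Ptrans x z * Pstep m' z y
  end.

Definition pker (m : nat) (x y : V) : R := Pstep m x y / muv y.

Definition qker (m : nat) (x y : V) : R := (pker m x y + pker m.+1 x y) / 2.

Definition energy (f : V -> R) : \bar R :=
  (2^-1)%:E * \esum_(x in [set: V]) (\sum_(y <- N x) mu x y * (f x - f y) ^+ 2)%:E.

Definition resist (x y : V) : \bar R :=
  ereal_sup [set ((f x - f y) ^+ 2 / fine (energy f))%:E |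
                 f in [set f : V -> R | (energy f < +oo)%E /\ (0 < energy f)%E]].

Definition volG (rho : V) (r : R) : \bar R :=
  \esum_(x in [set x | (resist rho x <= r%:E)%E]) (muv x)%:E.

Definition hG (rho : V) (r : R) : \bar R := (r%:E * volG rho r)%E.

Definition hGinv (rho : V) (m : R) : \bar R :=
  ereal_sup [set r%:E | r in [set r : R | (hG rho r <= m%:E)%E]].

End WGraph.

(* Main.v *)
Require Import Defs.
From HB Require Import structures.
From mathcomp Require Import all_boot all_order all_algebra.
From mathcomp Require Import all_classical all_reals all_analysis.
From mathcomp Require Import ring lra zify.
Import Order.TTheory GRing.Theory Num.Theory.
Local Open Scope classical_set_scope.
Local Open Scope ring_scope.
Section Main.
Variables (R : realType) (V : choiceType) (mu : V -> V -> R) (N : V -> seq V) (rho : V).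
Hypothesis HG : is_wgraph mu N.

Lemma mu_sym x y : mu x y = mu y x. Proof. by case: HG. Qed.
Lemma mu_ge0 x y : 0 <= mu x y. Proof. by case: HG => _ []. Qed.
Lemma mu_N x y : (0 < mu x y) <-> (y \in N x). Proof. by case: HG => _ [] _ []. Qed.
Lemma N_uniq x : uniq (N x). Proof. by case: HG => _ [] _ [] _ []. Qed.
Lemma mu_0 x y : mu x y != 0 -> y \in N x.
Proof. by move=> h; apply/mu_N; rewrite lt_neqAle eq_sym h mu_ge0. Qed.
Lemma mu_notN x y : y \notin N x -> mu x y = 0.
Proof. by move=> h; apply/eqP; apply: contraNT h; apply: mu_0. Qed.
Lemma N_sym x y : (y \in N x) = (x \in N y).
Proof. by apply/idP/idP => /mu_N h; apply/mu_N; rewrite mu_sym. Qed.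
Lemma N_irr x : x \notin N x.
Proof. by apply/negP => /mu_N; case: HG => _ [] _ [] _ [] _ [] -> _; rewrite ltxx. Qed.

Lemma muv_gt0 x : 0 < muv mu N x.
Proof.
case: HG => _ [] _ [] _ [] _ [] _ [] conn [x0 [y0 xy0]].
have [y xy] : exists y, y <> x.
  case: (eqVneq x x0) => [->|h]; first by exists y0 => /esym.
  by exists x0 => /esym /eqP; rewrite (negbTE h).
have [p [pp lp]] := conn x y.
case: p pp lp => [|b p] /=; first by move=> _ /esym.
move=> /andP[bN _] _.
rewrite /muv (bigD1_seq b) //=; last exact: N_uniq.
apply: (lt_le_trans (proj2 (mu_N x b) bN)); rewrite lerDl.
by apply: sumr_ge0 => i _; apply: mu_ge0.
Qed.

Lemma muv_neq0 x : muv mu N x != 0. Proof. by rewrite gt_eqF // muv_gt0. Qed.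

Lemma Ptrans_ge0 x y : 0 <= Ptrans mu N x y.
Proof. by rewrite /Ptrans divr_ge0 // ?mu_ge0 // ltW // muv_gt0. Qed.

Lemma PtransM x y : Ptrans mu N x y * muv mu N x = mu x y.
Proof. by rewrite /Ptrans divfK // muv_neq0. Qed.

Lemma Lsum (A B : seq V) (h : V -> R) : uniq A -> uniq B ->
  (forall y, h y != 0 -> (y \in A) && (y \in B)) ->
  \sum_(y <- A) h y = \sum_(y <- B) h y.
Proof.
move=> uA uB hAB.
have e1 : \sum_(y <- A) h y = \sum_(y <- A | y \in B) h y.
  rewrite [LHS](bigID (fun y => y \in B)) /= [X in _ + X]big1 ?addr0 // => y yB.
  by apply/eqP; apply: contraNT yB => /hAB /andP[].
have e2 : \sum_(y <- B) h y = \sum_(y <- B | y \in A) h y.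
  rewrite [LHS](bigID (fun y => y \in A)) /= [X in _ + X]big1 ?addr0 // => y yA.
  by apply/eqP; apply: contraNT yA => /hAB /andP[].
have hp : perm_eq [seq y <- A | y \in B] [seq y <- B | y \in A].
  by apply: uniq_perm; [exact: filter_uniq|exact: filter_uniq|move=> y; rewrite !mem_filter andbC].
by rewrite e1 e2 -[LHS]big_filter -[RHS]big_filter (perm_big _ hp).
Qed.

Lemma PstepS n x y : Pstep mu N n.+1 x y =
  \sum_(z <- N x) Ptrans mu N x z * Pstep mu N n z y.
Proof. by []. Qed.

Lemma Pstep_ge0 n x y : 0 <= Pstep mu N n x y.
Proof.
elim: n x => [|n IH] x /=; first by case: eqP.
by apply: sumr_ge0 => z _; apply: mulr_ge0; [apply: Ptrans_ge0|apply: IH].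
Qed.

Lemma sum1_seq (s : seq V) (F : V -> R) x : uniq s ->
  (forall y, y \notin s -> F y = 0) ->
  \sum_(y <- s) (if y == x then F y else 0) = F x.
Proof.
move=> us hs.
rewrite (@Lsum s [:: x]) //; first by rewrite big_seq1 eqxx.
move=> y; have [->|ne] := eqVneq y x; last by rewrite eqxx.
rewrite mem_seq1 eqxx andbT.
by case: (boolP (x \in s)) => // /hs ->; rewrite eqxx.
Qed.

Lemma sum1r (s : seq V) (F : V -> R) x : uniq s ->
  (forall y, y \notin s -> F y = 0) ->
  \sum_(y <- s) F y * (if y == x then 1 else 0) = F x.
Proof.
move=> us hs; rewrite -(@sum1_seq s F x us hs); apply: eq_bigr => y _.
by case: eqP; rewrite ?mulr1 ?mulr0.
Qed.

Lemma sum1l (s : seq V) (F : V -> R) x : uniq s ->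
  (forall y, y \notin s -> F y = 0) ->
  \sum_(y <- s) (if x == y then 1 else 0) * F y = F x.
Proof.
move=> us hs; rewrite -(@sum1_seq s F x us hs); apply: eq_bigr => y _.
by rewrite eq_sym; case: eqP; rewrite ?mul1r ?mul0r.
Qed.

Lemma CK n y x : Pstep mu N n.+1 y x =
  \sum_(z <- N x) Pstep mu N n y z * Ptrans mu N z x.
Proof.
elim: n y => [|n IH] y.
  rewrite /=.
  rewrite (@sum1r (N y) (fun w => Ptrans mu N y w) x); last 2 first.
  - exact: N_uniq.
  - by move=> w wN; rewrite /Ptrans mu_notN // mul0r.
  rewrite (@sum1l (N x) (fun w => Ptrans mu N w x) y) //; first exact: N_uniq.
  by move=> w wN; rewrite /Ptrans mu_notN ?mul0r // N_sym.
rewrite [LHS]PstepS.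
under eq_bigr do rewrite IH big_distrr /=.
rewrite exchange_big /=; apply: eq_bigr => z _.
by rewrite ?PstepS big_distrl /=; apply: eq_bigr => w _; rewrite mulrA.
Qed.

Lemma rev_step n x y :
  muv mu N x * Pstep mu N n x y = muv mu N y * Pstep mu N n y x.
Proof.
elim: n x y => [|n IH] x y.
  by rewrite /= eq_sym; case: eqP => [->|]; rewrite ?mulr0.
rewrite PstepS big_distrr CK big_distrr /=.
apply: eq_bigr => z _.
have hz := muv_neq0 z.
have hx := muv_neq0 x.
have -> : Pstep mu N n z y = muv mu N y * Pstep mu N n y z / muv mu N z.
  by rewrite -IH; field.
by rewrite /Ptrans (mu_sym x z); field; rewrite hz hx.
Qed.

Fixpoint ball n : seq V :=
  if n is n'.+1 then undup (ball n' ++ flatten [seq N x | x <- ball n'])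
  else [:: rho].

Definition u n z := Pstep mu N n z rho / muv mu N rho.
Definition Pop (f : V -> R) x := \sum_(y <- N x) Ptrans mu N x y * f y.
Definition Bf K (f g : V -> R) := \sum_(x <- ball K) f x * g x * muv mu N x.
Definition supp K (f : V -> R) := forall z, z \notin ball K -> f z = 0.
Definition lc (a : R) f (b : R) g := fun z : V => a * f z + b * g z.

Lemma ball_uniq n : uniq (ball n).
Proof. by case: n => [|n] //=; rewrite undup_uniq. Qed.

Lemma ball_sub {n x} : x \in ball n -> x \in ball n.+1.
Proof. by move=> h; rewrite /= mem_undup mem_cat h. Qed.

Lemma ball_N {n x y} : x \in ball n -> y \in N x -> y \in ball n.+1.
Proof.
move=> hx hy; rewrite /= mem_undup mem_cat; apply/orP; right.
by apply/flatten_mapP; exists x.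
Qed.

Lemma ball_mono i j x : (i <= j)%N -> x \in ball i -> x \in ball j.
Proof.
move=> /subnK <-; elim: (j - i)%N => [|d IH] // h.
by rewrite addSn; apply: ball_sub; apply: IH.
Qed.

Lemma rho_ball n : rho \in ball n.
Proof. by apply: (@ball_mono 0); rewrite ?mem_seq1. Qed.

Lemma supp_mono i j f : (i <= j)%N -> supp i f -> supp j f.
Proof.
move=> ij h z zj; apply: h; apply: contra zj; exact: ball_mono.
Qed.

Lemma uS n : u n.+1 = Pop (u n).
Proof.
apply: funext => x; rewrite /u /Pop PstepS big_distrl /=.
by apply: eq_bigr => y _; rewrite mulrA.
Qed.

Lemma u_supp n : supp n (u n).
Proof.
elim: n => [|n IH] z zn.
  rewrite /u /=; case: eqP => [e|]; last by rewrite mul0r.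
  by move: zn; rewrite e mem_seq1 eqxx.
rewrite uS /Pop big1_seq // => y /andP[_ yN].
case: (boolP (y \in ball n)) => [yb|/IH ->]; last by rewrite mulr0.
by move: zn; rewrite (ball_N yb) // -N_sym.
Qed.

Lemma PopM f x : Pop f x * muv mu N x = \sum_(y <- N x) mu x y * f y.
Proof.
rewrite /Pop big_distrl /=; apply: eq_bigr => y _.
by rewrite mulrAC PtransM.
Qed.

Lemma Pop_lc a f b g x : Pop (lc a f b g) x = a * Pop f x + b * Pop g x.
Proof.
rewrite /Pop /lc !big_distrr -big_split /=; apply: eq_bigr => y _; ring.
Qed.

Lemma DS K (F : V -> V -> R) : (forall x y, F x y != 0 -> y \in ball K) ->
  \sum_(x <- ball K) \sum_(y <- N x) mu x y * F x y =
  \sum_(x <- ball K) \sum_(y <- ball K) mu x y * F x y.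
Proof.
move=> hF; apply: eq_bigr => x _; apply: Lsum; [exact: N_uniq|exact: ball_uniq|].
move=> y; rewrite mulf_eq0 negb_or => /andP[/mu_0 -> /hF ->] //.
Qed.

Lemma SA K f g : supp K f -> supp K g -> Bf K (Pop f) g = Bf K f (Pop g).
Proof.
move=> sf sg.
have e1 : forall f g, supp K f -> Bf K (Pop f) g =
    \sum_(x <- ball K) \sum_(y <- ball K) mu x y * (f y * g x).
  move=> f' g' sf'; rewrite /Bf -DS.
    apply: eq_bigr => x _; rewrite mulrAC PopM big_distrl /=.
    by apply: eq_bigr => y _; rewrite mulrA.
  move=> x y; rewrite mulf_eq0 negb_or => /andP[h _].
  by apply: contraNT h => /sf' ->.
rewrite e1 //.
transitivity (Bf K (Pop g) f); last by rewrite /Bf; apply: eq_bigr => x _; rewrite (mulrC (f x)).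
rewrite e1 // exchange_big /=; apply: eq_bigr => x _; apply: eq_bigr => y _.
by rewrite mu_sym; ring.
Qed.

Lemma Bu K i j : (i + j <= K)%N -> Bf K (u i) (u j) = u (i + j) rho.
Proof.
elim: i j => [|i IH] j hij.
  rewrite /Bf (@Lsum _ [:: rho]); first by rewrite big_seq1 /u /= eqxx; field; rewrite muv_neq0.
  - exact: ball_uniq.
  - by [].
  move=> x; have [->|ne] := eqVneq x rho; first by rewrite rho_ball mem_seq1 eqxx.
  by rewrite /u /= (negbTE ne) !mul0r eqxx.
rewrite uS SA; last 2 first.
- by apply: (@supp_mono i K); [lia|exact: u_supp].
- by apply: (@supp_mono j K); [lia|exact: u_supp].
by rewrite -uS IH ?addnS //; lia.
Qed.

Lemma T3 K h : supp K h ->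
  \sum_(x <- ball K.+1) \sum_(y <- N x) mu x y * h y =
  \sum_(y <- ball K.+1) muv mu N y * h y.
Proof.
move=> sh; rewrite (@DS K.+1 (fun _ y => h y)); last first.
  move=> x y hy; apply: (@ball_mono K); first exact: leqnSn.
  by apply: contraNT hy => /sh ->.
rewrite exchange_big /=; apply: eq_bigr => y _.
transitivity (\sum_(x <- ball K.+1) mu y x * h y).
  by apply: eq_bigr => x _; rewrite mu_sym.
rewrite -big_distrl /=.
case: (boolP (y \in ball K)) => [yb|/sh ->]; last by rewrite !mulr0.
congr (_ * _); rewrite /muv; apply: (@Lsum (ball K.+1) (N y)); [exact: ball_uniq|exact: N_uniq|].
by move=> x /mu_0 xN; rewrite (ball_N yb xN) xN.
Qed.

Lemma mass K n : (n <= K)%N -> \sum_(x <- ball K.+1) u n x * muv mu N x = 1.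
Proof.
elim: n => [|n IH] hn.
  rewrite (@Lsum _ [:: rho]); first by rewrite big_seq1 /u /= eqxx; field; rewrite muv_neq0.
  - exact: ball_uniq.
  - by [].
  move=> x; have [->|ne] := eqVneq x rho; first by rewrite rho_ball mem_seq1 eqxx.
  by rewrite /u /= (negbTE ne) !mul0r eqxx.
rewrite uS; under eq_bigr do rewrite PopM.
rewrite T3; last by apply: (@supp_mono n K); [lia|exact: u_supp].
rewrite -[RHS](IH _); last by lia.
by apply: eq_bigr => x _; rewrite mulrC.
Qed.

Lemma QF K s w : s * s = 1 -> supp K w ->
  \sum_(x <- ball K.+1) \sum_(y <- N x) mu x y * (w x + s * w y) ^+ 2 =
  2 * (Bf K.+1 w w + s * Bf K.+1 w (Pop w)).
Proof.
move=> hs sw.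
have e : forall x y, mu x y * (w x + s * w y) ^+ 2 =
   mu x y * w x ^+ 2 + 2 * s * (w x * (mu x y * w y)) + mu x y * w y ^+ 2.
  move=> x y.
  transitivity (mu x y * w x ^+ 2 + 2 * s * (w x * (mu x y * w y)) +
     (s * s) * (mu x y * w y ^+ 2)); first by ring.
  by rewrite hs mul1r.
transitivity (\sum_(x <- ball K.+1) (muv mu N x * w x ^+ 2 +
    2 * s * (w x * (Pop w x * muv mu N x))) +
    \sum_(x <- ball K.+1) \sum_(y <- N x) mu x y * w y ^+ 2).
  rewrite -big_split; apply: eq_bigr => x _ /=.
  rewrite PopM big_distrr /= big_distrr /= /muv big_distrl /= -!big_split /=.
  by apply: eq_bigr => y _; rewrite e.
rewrite (@T3 K (fun y => w y ^+ 2)); last first.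
  by move=> z /sw ->; rewrite expr0n.
have -> : forall (F G : V -> R), 2 * (\sum_(x <- ball K.+1) F x + s * \sum_(x <- ball K.+1) G x)
    = \sum_(x <- ball K.+1) 2 * (F x + s * G x).
  by move=> F G; rewrite -big_distrr /= big_split /= -big_distrr.
rewrite -big_split /=; apply: eq_bigr => x _; ring.
Qed.

Lemma esum_seq (L : seq V) (h : V -> R) : uniq L -> (forall x, 0 <= h x) ->
  (forall x, x \notin L -> h x = 0) ->
  \esum_(x in [set: V]) (h x)%:E = (\sum_(x <- L) h x)%:E.
Proof.
move=> uL h0 hL.
rewrite -sumEFin (fsbig_seq _ _ uL) -esum_fset; last 2 first.
- exact: finite_seq.
- by move=> i _; rewrite lee_fin.
rewrite [RHS]esum_mkcond; apply: eq_esum => x _.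
case: ifPn => // xL; rewrite hL //.
by apply: contra xL => xL; rewrite inE.
Qed.

Lemma energyE K w : supp K w -> energy mu N w =
  (2^-1 * \sum_(x <- ball K.+1) \sum_(y <- N x) mu x y * (w x - w y) ^+ 2)%:E.
Proof.
move=> sw; rewrite /energy (@esum_seq (ball K.+1)) ?EFinM //.
- exact: ball_uniq.
- by move=> x; apply: sumr_ge0 => y _; rewrite mulr_ge0 ?mu_ge0 ?sqr_ge0.
move=> x xn; apply: big1_seq => y /andP[_ yN].
have -> : w x = 0 by apply: sw; apply: contra xn; apply: ball_sub.
have -> : w y = 0.
  apply: sw; apply: contra xn => yb; apply: (ball_N yb); by rewrite -N_sym.
by rewrite subrr expr0n mulr0.
Qed.

Definition a n := u n rho.
Definition Qv s al i be j := al ^+ 2 * (a (i + i) + s * a (i + i).+1)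
  + 2 * al * be * (a (i + j) + s * a (i + j).+1)
  + be ^+ 2 * (a (j + j) + s * a (j + j).+1).
Definition c n := (a (n + n) + a (n + n).+1) / 2.
Definition qfun n := lc (2^-1) (u n) (2^-1) (u n.+1).

Lemma Bf_lc2 K a1 f1 b1 g1 a2 f2 b2 g2 :
  Bf K (lc a1 f1 b1 g1) (lc a2 f2 b2 g2) = a1 * a2 * Bf K f1 f2 +
   a1 * b2 * Bf K f1 g2 + b1 * a2 * Bf K g1 f2 + b1 * b2 * Bf K g1 g2.
Proof. rewrite /Bf /lc !big_distrr -!big_split /=; apply: eq_bigr => x _; ring. Qed.

Lemma Pop_lcF al f be g : Pop (lc al f be g) = lc al (Pop f) be (Pop g).
Proof. by apply: funext => x; rewrite Pop_lc. Qed.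

Lemma supp_lc K al f be g : supp K f -> supp K g -> supp K (lc al f be g).
Proof. by move=> sf sg z zK; rewrite /lc sf ?sg // !mulr0 addr0. Qed.

Lemma QFu K s al i be j n : s * s = 1 -> (i <= n)%N -> (j <= n)%N ->
  (n + n <= K)%N ->
  \sum_(x <- ball K.+1) \sum_(y <- N x) mu x y *
     (lc al (u i) be (u j) x + s * lc al (u i) be (u j) y) ^+ 2 =
  2 * Qv s al i be j.
Proof.
move=> hs hi hj hK.
rewrite QF //; last first.
  by apply: supp_lc; [apply: (@supp_mono i K)|apply: (@supp_mono j K)];
     first [exact: u_supp | lia].
rewrite Pop_lcF -!uS !Bf_lc2 !Bu; try lia.
rewrite /Qv /a !addnS (addnC j i); ring.
Qed.

Lemma Qv_ge0 s al i be j : s * s = 1 -> 0 <= Qv s al i be j.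
Proof.
move=> hs.
have := @QFu (maxn i j + maxn i j) s al i be j (maxn i j) hs (leq_maxl _ _) (leq_maxr _ _) (leqnn _).
move=> e.
have : 0 <= 2 * Qv s al i be j.
  rewrite -e; apply: sumr_ge0 => x _; apply: sumr_ge0 => y _.
  by rewrite mulr_ge0 ?mu_ge0 ?sqr_ge0.
by rewrite pmulr_rge0 // ltr0n.
Qed.

Lemma energy_u al i be j :
  energy mu N (lc al (u i) be (u j)) = (Qv (-1) al i be j)%:E.
Proof.
set n := maxn i j.
rewrite (@energyE (n + n)); last first.
  by apply: supp_lc; [apply: (@supp_mono i)|apply: (@supp_mono j)];
     first [exact: u_supp | lia].
have h2 : (2 : R) != 0 by rewrite pnatr_eq0.
rewrite -[Qv _ _ _ _ _](mulKf h2) -(@QFu (n + n) (-1) al i be j n) ?mulN1r ?opprK ?leq_maxl ?leq_maxr //.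
by congr (_%:E); congr (_ * _); apply: eq_bigr => x _; apply: eq_bigr => y _; rewrite mulN1r.
Qed.

Lemma energy_q m : energy mu N (qfun m) = ((c m - c m.+1) / 2)%:E.
Proof.
rewrite /qfun energy_u; congr (_%:E).
rewrite /Qv /c !addnS !addSn; ring.
Qed.

Lemma conv n : 0 <= c n - 2 * c n.+1 + c n.+2.
Proof.
have := @Qv_ge0 1 1 n (-1) n.+2 (mulr1 1).
rewrite /Qv /c !addnS !addSn; nra.
Qed.

Lemma a1_0 : a 1 = 0.
Proof.
rewrite /a /u /= (@sum1r (N rho) (fun w => Ptrans mu N rho w) rho).
- by rewrite /Ptrans; case: HG => _ [] _ [] _ [] _ [] -> _; rewrite !mul0r.
- exact: N_uniq.
- by move=> w wN; rewrite /Ptrans mu_notN // mul0r.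
Qed.

Lemma energy_u0 : energy mu N (lc 1 (u 0) 0 (u 0)) = (a 0)%:E.
Proof. by rewrite energy_u /Qv a1_0 /=; congr (_%:E); ring. Qed.

Lemma a0_gt0 : 0 < a 0.
Proof. by rewrite /a /u /= eqxx mul1r invr_gt0 muv_gt0. Qed.

Lemma u_ge0 n x : 0 <= u n x.
Proof. by rewrite /u divr_ge0 ?Pstep_ge0 // ltW // muv_gt0. Qed.

Lemma qfun_ge0 n x : 0 <= qfun n x.
Proof. by rewrite /qfun /lc addr_ge0 // mulr_ge0 ?u_ge0 // invr_ge0 ler0n. Qed.

Lemma c_ge0 n : 0 <= c n.
Proof. by rewrite /c divr_ge0 ?addr_ge0 ?ler0n // /a u_ge0. Qed.

Lemma mass_q K n : (n.+1 <= K)%N -> \sum_(x <- ball K.+1) qfun n x * muv mu N x = 1.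
Proof.
move=> hn.
transitivity (2^-1 * \sum_(x <- ball K.+1) u n x * muv mu N x +
  2^-1 * \sum_(x <- ball K.+1) u n.+1 x * muv mu N x).
  rewrite !big_distrr -big_split /=; apply: eq_bigr => x _; rewrite /qfun /lc; ring.
by rewrite !mass; try lia; field.
Qed.

Lemma qkerE m x : qker mu N m rho x = qfun m x.
Proof.
have pk n : pker mu N n rho x = u n x.
  rewrite /pker /u; apply/eqP; rewrite eqr_div ?muv_neq0 //; apply/eqP.
  by rewrite mulrC rev_step mulrC.
by rewrite /qker /qfun /lc !pk; field.
Qed.

Lemma energy0_const f : energy mu N f = 0%:E -> forall x y, f x = f y.
Proof.
move=> h0.
have hT : forall a, \sum_(b <- N a) mu a b * (f a - f b) ^+ 2 = 0.
  move=> a; apply/eqP; rewrite eq_le; apply/andP; split; last first.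
    by apply: sumr_ge0 => y _; rewrite mulr_ge0 ?mu_ge0 ?sqr_ge0.
  have hs : \esum_(x in [set: V]) (\sum_(y <- N x) mu x y * (f x - f y) ^+ 2)%:E = 0.
    move: h0; rewrite /energy => /eqP; rewrite mule_eq0 => /orP[|/eqP //].
    by rewrite eqe invr_eq0 pnatr_eq0.
  rewrite -lee_fin (_ : (0:R)%:E = 0) // -hs; apply: esum_ge; exists [set a].
    by split; [exact: finite_set1|by []].
  by rewrite fsbig_set1.
have hE : forall a b, b \in N a -> f a = f b.
  move=> a b bN; have := hT a; rewrite (bigD1_seq b) //= ?N_uniq // => e.
  have : mu a b * (f a - f b) ^+ 2 = 0.
    apply/eqP; rewrite eq_le mulr_ge0 ?mu_ge0 ?sqr_ge0 // andbT -e lerDl.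
    by apply: sumr_ge0 => y _; rewrite mulr_ge0 ?mu_ge0 ?sqr_ge0.
  move/eqP; rewrite mulf_eq0 (gt_eqF (proj2 (mu_N a b) bN)) /= sqrf_eq0 subr_eq0.
  by move/eqP.
move=> x y; case: HG => _ [] _ [] _ [] _ [] _ [] conn _.
have [p [pp lp]] := conn x y; rewrite -lp.
elim: p x pp {lp} => [|b p IH] x //= /andP[bN pp].
by rewrite (hE x b bN); apply: IH.
Qed.

Lemma ResIneq f e x y : energy mu N f = e%:E -> 0 <= e ->
  (((f x - f y) ^+ 2)%:E <= resist mu N x y * e%:E)%E.
Proof.
move=> he; rewrite le_eqVlt => /orP[/eqP e0|e0].
  rewrite -e0 mule0 (@energy0_const f _ x y) ?subrr ?expr0n //.
  by rewrite he -e0.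
have hr : ((((f x - f y) ^+ 2 / e)%:E <= resist mu N x y))%E.
  apply: ereal_sup_ubound => /=; exists f; last by rewrite he.
  by split; rewrite he ?ltry ?lte_fin.
rewrite -[(f x - f y) ^+ 2](@divfK _ e) ?(gt_eqF e0) // EFinM.
by apply: lee_wpmul2r => //; rewrite lee_fin ltW.
Qed.

Lemma res_ge0 x y : (0 <= resist mu N x y)%E.
Proof.
set f0 := lc 1 (u 0) 0 (u 0).
apply: (@le_trans _ _ ((((f0 x - f0 y) ^+ 2 / a 0))%:E)).
  by rewrite lee_fin divr_ge0 ?sqr_ge0 // ltW // a0_gt0.
apply: ereal_sup_ubound => /=; exists f0; last by rewrite energy_u0.
by split; rewrite energy_u0 ?ltry ?lte_fin ?a0_gt0.
Qed.

Lemma d_mono a0 n : c (a0 + n) - c (a0 + n).+1 <= c a0 - c a0.+1.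
Proof.
elim: n a0 => [|n IH] a0; first by rewrite addn0.
have := IH a0.+1; have := conv a0 => h1 h2.
rewrite !addSn in h2; rewrite !addnS; lra.
Qed.

Lemma conv_sum a0 n :
  (n.+1)%:R * (c (a0 + n) - c (a0 + n).+1) <= c a0 - c (a0 + n).+1.
Proof.
elim: n a0 => [|n IH] a0; first by rewrite addn0 mul1r.
have := IH a0.+1; have := d_mono a0 n.+1.
rewrite -[(n.+2)%:R]natr1 => h1 h2.
rewrite !addSn in h2; rewrite !addnS in h1 *; lra.
Qed.

Lemma energy_q_ge0 m : 0 <= (c m - c m.+1) / 2.
Proof.
have hs : (-1 : R) * -1 = 1 by rewrite mulrNN mulr1.
have := @Qv_ge0 (-1) (2^-1) m (2^-1) m.+1 hs.
rewrite /Qv /c !addnS !addSn; lra.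
Qed.

Lemma qfun_rho k : qfun (k + k) rho = c k.
Proof. by rewrite /qfun /lc /c /a; field. Qed.

Lemma vol_bound k r M : 0 < M -> (M%:E < hG mu N rho r)%E ->
  c k <= 2 * (r / M) + r / (2 * (k.+1)%:R).
Proof.
move=> M0 hM.
have vol0 : (0 <= volG mu N rho r)%E.
  by apply: esum_ge0 => x _; rewrite lee_fin ltW // muv_gt0.
have r0 : 0 < r.
  rewrite ltNge; apply/negP => r0.
  have : (hG mu N rho r <= 0)%E by rewrite /hG mule_le0_ge0 // lee_fin.
  by move=> /(lt_le_trans hM); rewrite lte_fin ltNge ltW.
set t := r / M.
have t0 : 0 < t by rewrite divr_gt0.
set f := qfun (k + k).
have [z [zr fz]] : exists z, (resist mu N rho z <= r%:E)%E /\ f z <= t.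
  case: (pselect (exists z, (resist mu N rho z <= r%:E)%E /\ f z <= t)) => // hno.
  exfalso.
  have hlt : forall z, (resist mu N rho z <= r%:E)%E -> t < f z.
    by move=> z hz; rewrite ltNge; apply/negP => fz; apply: hno; exists z.
  have hg0 : forall x, 0 <= f x * muv mu N x / t.
    move=> x; apply: divr_ge0; last exact: ltW.
    by apply: mulr_ge0; [exact: qfun_ge0|exact: ltW (muv_gt0 x)].
  have hv : (volG mu N rho r <= (t^-1)%:E)%E.
    apply: (@le_trans _ _ (\esum_(x in [set x | (resist mu N rho x <= r%:E)%E])
                             ((f x * muv mu N x) / t)%:E)).
      apply: le_esum => x /= hx; rewrite lee_fin ler_pdivlMr //.
      by rewrite (mulrC (f x)) (ler_pM2l (muv_gt0 x)) ltW // hlt.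
    apply: (@le_trans _ _ (\esum_(x in [set: V]) ((f x * muv mu N x) / t)%:E)).
      rewrite [X in (X <= _)%E]esum_mkcond; apply: le_esum => x _.
      case: ifP => _ //; rewrite lee_fin.
      exact: hg0.
    rewrite (@esum_seq (ball (k + k).+2)); last 3 first.
    - exact: ball_uniq.
    - exact: hg0.
    - move=> x xb; rewrite /f /qfun.
      have := @supp_lc (k + k).+2 (2^-1) (u (k + k)) (2^-1) (u (k + k).+1).
      move=> /(_ _ _ x xb) -> //.
      + by rewrite !mul0r.
      + by apply: (@supp_mono (k + k)); [lia|exact: u_supp].
      + by apply: (@supp_mono (k + k).+1); [lia|exact: u_supp].
    by rewrite -big_distrl /f mass_q // lee_fin /= mul1r.
  have : (hG mu N rho r <= M%:E)%E.
    rewrite /hG; apply: (@le_trans _ _ (r%:E * (t^-1)%:E)%E).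
      by apply: lee_wpmul2l => //; rewrite lee_fin ltW.
    by rewrite -EFinM lee_fin /t invf_div mulrCA divff ?mulr1 ?gt_eqF.
  by move=> /(lt_le_trans hM); rewrite ltxx.
set E := (c (k + k) - c (k + k).+1) / 2.
have E0 : 0 <= E := energy_q_ge0 (k + k).
have hfz : (f rho - f z) ^+ 2 <= r * E.
  rewrite -lee_fin EFinM.
  apply: (le_trans (@ResIneq f E rho z (energy_q (k + k)) E0)).
  have E0e : (0 <= E%:E)%E by rewrite lee_fin.
  exact: (lee_wpmul2r E0e zr).
rewrite (qfun_rho k : f rho = c k) in hfz.
have hcs := conv_sum k k.
have hck := c_ge0 k.
have hc2 := c_ge0 (k + k).+1.
have fz0 : 0 <= f z := qfun_ge0 _ _.
set C := c k in hfz hcs hck *.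
set K1 := (k.+1)%:R in hcs *.
have K10 : 0 < K1 by rewrite ltr0n.
have hE : r * E * (2 * K1) <= r * C.
  rewrite -mulrA ler_pM2l // /E.
  have -> : (c (k + k) - c (k + k).+1) / 2 * (2 * K1) =
     K1 * (c (k + k) - c (k + k).+1) by field.
  lra.
set be := r / (2 * K1).
have hbe : r * E <= be * C.
  rewrite /be -ler_pdivlMr ?mulr_gt0 // in hE.
  by rewrite mulrAC.
have be0 : 0 <= be by rewrite divr_ge0 ?ltW // mulr_gt0.
case: (lerP C t) => hCt; first lra.
have h1 : (C - t) ^+ 2 <= be * C.
  apply: le_trans hbe; apply: le_trans hfz.
  rewrite ler_sqr ?nnegrE; lra.
nra.
Qed.

Lemma bound_e m r : (0 < m)%N -> ((uphalf m)%:R%:E < hG mu N rho r)%E ->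
  (c m - c m.+1) / 2 * (m%:R ^+ 2) <= 5 * r.
Proof.
move=> m0 hr.
set M := uphalf m.
have hM : (M + M = odd m + m)%N by rewrite addnn uphalfK.
have hodd : (odd m <= 1)%N by case: (odd m).
have M1 : (1 <= M)%N by lia.
have Mm : (M <= m)%N by lia.
have Mr0 : 0 < M%:R :> R by rewrite ltr0n.
have hv := @vol_bound M.-1 r M%:R Mr0 hr.
rewrite prednK // in hv.
set j := (m - M.-1)%N.
have hcs := conv_sum M.-1 j.
have ej : (M.-1 + j = m)%N by rewrite /j; lia.
rewrite ej in hcs.
have hjn : (j.+1 + M = m + 2)%N by rewrite /j; lia.
have hjr : (j.+1)%:R + M%:R = m%:R + 2 :> R.
  by rewrite -natrD hjn natrD.
have h2M : m%:R <= 2 * M%:R :> R.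
  by rewrite -[2]/(1 + 1) mulrDl mul1r -natrD ler_nat; lia.
have h2M' : 2 * M%:R <= m%:R + 1 :> R.
  by rewrite -[2]/(1 + 1) mulrDl mul1r -natrD -(natrD _ m 1) ler_nat; lia.
have hc0 := c_ge0 m.+1.
have hcM := c_ge0 M.-1.
set C := c M.-1 in hv hcs hcM *.
set d := c m - c m.+1 in hcs *.
have hd : 0 <= d by have := energy_q_ge0 m; rewrite /d; lra.
set Mr := M%:R in hv hjr h2M h2M' Mr0 *.
set mr := m%:R in hjr h2M h2M' *.
set Jr := (j.+1)%:R in hjr hcs *.
have hCM : C * Mr <= 5 / 2 * r.
  have -> : 5 / 2 * r = (2 * (r / Mr) + r / (2 * Mr)) * Mr.
    by field; rewrite gt_eqF.
  by rewrite ler_pM2r.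
have h1 : Jr * d <= C by lra.
have hMr1 : 1 <= Mr by rewrite /Mr ler1n.
have hp : 0 <= (2 * Mr - mr) * (mr + 1 - 2 * Mr) by apply: mulr_ge0; lra.
have h4 : mr ^+ 2 <= 4 * Mr * Jr.
  have -> : Jr = mr + 2 - Mr by lra.
  nra.
have : d * mr ^+ 2 <= 5 * r * 2 by nra.
lra.
Qed.

Lemma main_lemma m : (0 < m)%N -> forall x y : V,
    (((qker mu N m rho x - qker mu N m rho y) ^+ 2)%:E <=
     (12%:R)%:E * resist mu N x y * hGinv mu N rho (uphalf m)%:R
       * ((m%:R ^+ 2)^-1)%:E)%E.
Proof.
move=> m0 x y.
rewrite !qkerE.
set e := (c m - c m.+1) / 2.
have e0 : 0 <= e := energy_q_ge0 m.
have hL := @ResIneq (qfun m) e x y (energy_q m) e0.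
have hres := res_ge0 x y.
have mr0 : 0 < m%:R :> R by rewrite ltr0n.
have k0 : 0 < (m%:R ^+ 2)^-1 :> R by rewrite invr_gt0 exprn_gt0.
set M := uphalf m.
have H0 : (0 <= hGinv mu N rho M%:R)%E.
  apply: ereal_sup_ubound => /=; exists 0 => //.
  by rewrite /hG mul0e lee_fin ler0n.
case eH : (hGinv mu N rho M%:R) H0 => [h| |] // H0.
- have h0 : 0 <= h by rewrite -lee_fin.
  have heh : e * m%:R ^+ 2 / 5 <= h.
    have key : forall z, h < z -> e * m%:R ^+ 2 / 5 <= z.
    move=> z hz.
    have hr : (M%:R%:E < hG mu N rho z)%E.
      rewrite ltNge; apply/negP => hz'.
      have : (z%:E <= hGinv mu N rho M%:R)%E.
        by apply: ereal_sup_ubound => /=; exists z.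
      by rewrite eH lee_fin leNgt hz.
    have := @bound_e m z m0 hr.
    rewrite -/e => hb.
    by rewrite ler_pdivrMr //; lra.
    rewrite leNgt; apply/negP => hv.
    have := key ((h + e * m%:R ^+ 2 / 5) / 2); lra.
  have hek : e <= 12 * h * (m%:R ^+ 2)^-1.
    rewrite -[12 * h * _]/(12 * h / m%:R ^+ 2) ler_pdivlMr ?exprn_gt0 //.
    move: heh; rewrite ler_pdivrMr //; lra.
  apply: (le_trans hL).
  rewrite (muleC 12%:E) -!muleA.
  apply: lee_wpmul2l => //.
  by rewrite -!EFinM lee_fin mulrA.
- have [r0|rpos] : resist mu N x y = 0 \/ (0 < resist mu N x y)%E.
    by move: hres; rewrite le_eqVlt => /orP[/eqP <-|]; [left|right].
  + apply: (le_trans hL).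
    by rewrite r0 mul0e mule0 mul0e mul0e.
  + have h12 : (0 < 12%:R%:E * resist mu N x y)%E.
      by apply: mule_gt0 => //; rewrite lte_fin ltr0n.
    by rewrite gt0_muley // gt0_mulye ?lte_fin // leey.
Qed.
End Main.

Theorem proposition4p4 (R : realType) (V : choiceType)
  (mu : V -> V -> R) (N : V -> seq V) (rho : V) :
  is_wgraph mu N ->
  forall m : nat, (0 < m)%N ->
  forall x y : V,
    (((qker mu N m rho x - qker mu N m rho y) ^+ 2)%:E <=
     (12%:R)%:E * resist mu N x y * hGinv mu N rho (uphalf m)%:R
       * ((m%:R ^+ 2)^-1)%:E)%E.
Proof. by move=> HG m m0 x y; apply: main_lemma. Qed.
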